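(* Let $j,k$ be two settings with short-regression parameters $\theta^j_s,\theta^k_s$ and bias bounds $\nu^j_l=-\nu^{j*}$, $\nu^j_u=\nu^{j*}$, $\nu^k_l=-\nu^{k*}$, $\nu^k_u=\nu^{k*}$ with $\nu^{j*},\nu^{k*}>0$, and suppose the proportionality bounds are symmetric: $\rho^{jk}\in[1/\rho^{jk}_u,\rho^{jk}_u]$ with $\rho^{jk}_u\ge1$. Let $\mathbb{C}^{jk}=\{\frac{1-\rho^{jk}_u}{\rho^{jk}_u}\nu^k_l,(\rho^{jk}_u-1)\nu^k_l,\frac{1-\rho^{jk}_u}{\rho^{jk}_u}\nu^k_u,(\rho^{jk}_u-1)\nu^k_u\}$, $c^{jk}_l=\min\mathbb{C}^{jk}$, $c^{jk}_u=\max\mathbb{C}^{jk}$. Then $c^{jk}_u=(\rho^{jk}_u-1)\nu^{k*}$ and $c^{jk}_l=-(\rho^{jk}_u-1)\nu^{k*}$, and the marginal sharpening conditions — namely (1) $\nu^k_u+c^{jk}_u<\nu^j_u$ or (2) $\nu^k_l+c^{jk}_l>\nu^j_l$ — reduce to $\nu^{j*}>\rho^{jk}_u\nu^{k*}$. In particular, when $\nu^{j*}=\nu^{k*}$, strict marginal sharpening never occurs for any $\rho^{jk}_u>1$, i.e. $\mathrm{proj}_j(\mathcal{J}^{jk})=\mathcal{I}^j$.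
   Context: Here $\mathcal{I}^i=[\theta^i_s-\nu^i_u,\theta^i_s-\nu^i_l]$ for $i\in\{j,k\}$, $\mathcal{I}^{jk}_D=[(\theta^j_s-\theta^k_s)-c^{jk}_u,(\theta^j_s-\theta^k_s)-c^{jk}_l]$, $\mathcal{J}^{jk}=\{(\theta^j,\theta^k):\theta^j\in\mathcal{I}^j,\theta^k\in\mathcal{I}^k,\theta^j-\theta^k\in\mathcal{I}^{jk}_D\}$, and $\mathrm{proj}_j(\mathcal{J}^{jk})=\{\theta^j:\exists\theta^k,(\theta^j,\theta^k)\in\mathcal{J}^{jk}\}$. Strict marginal sharpening means $\mathrm{proj}_j(\mathcal{J}^{jk})\subsetneq\mathcal{I}^j$, which holds if and only if condition (1) or (2) holds. In the paper's framework, $\theta^i$ is a setting-specific causal effect, $\theta^i_s$ the corresponding omitted-variable short-regression parameter, the bias $B^i=\theta^i_s-\theta^i$ lies in $[\nu^i_l,\nu^i_u]$, and $B^j=\rho^{jk}B^k$. *)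

(* Defs.v *)
From HB Require Import structures.
From mathcomp Require Import all_boot all_order all_algebra.
From mathcomp Require Import classical_sets.
Set Implicit Arguments. Unset Strict Implicit. Unset Printing Implicit Defensive.
Import Order.TTheory GRing.Theory Num.Theory.
Local Open Scope ring_scope.
Local Open Scope classical_set_scope.

Section Defs.
Variable R : realFieldType.

(* The four candidate values C^{jk}, for proportionality upper bound rho_u
   (lower bound 1/rho_u) and bias bounds nu_l, nu_u of setting k. *)
Definition Cjk (rho_u nu_l nu_u : R) : seq R :=
  [:: (1 - rho_u) / rho_u * nu_l; (rho_u - 1) * nu_l;
      (1 - rho_u) / rho_u * nu_u; (rho_u - 1) * nu_u].

Definition c_l (rho_u nu_l nu_u : R) : R :=
  Num.min (Num.min ((1 - rho_u) / rho_u * nu_l) ((rho_u - 1) * nu_l))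
          (Num.min ((1 - rho_u) / rho_u * nu_u) ((rho_u - 1) * nu_u)).
Definition c_u (rho_u nu_l nu_u : R) : R :=
  Num.max (Num.max ((1 - rho_u) / rho_u * nu_l) ((rho_u - 1) * nu_l))
          (Num.max ((1 - rho_u) / rho_u * nu_u) ((rho_u - 1) * nu_u)).

Definition Iint (ths nu_l nu_u : R) : set R :=
  [set t | ths - nu_u <= t <= ths - nu_l].

Definition IDint (thjs thks cl cu : R) : set R :=
  [set t | (thjs - thks) - cu <= t <= (thjs - thks) - cl].

Definition Jset (thjs thks nujl nuju nukl nuku cl cu : R) : set (R * R) :=
  [set p | Iint thjs nujl nuju p.1 /\ Iint thks nukl nuku p.2 /\
           IDint thjs thks cl cu (p.1 - p.2)].

Definition projj (J : set (R * R)) : set R :=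
  [set t | exists s, J (t, s)].

End Defs.

(* Main.v *)
Require Import Defs.
From HB Require Import structures.
From mathcomp Require Import all_boot all_order all_algebra.
From mathcomp Require Import classical_sets.
From mathcomp Require Import ring lra.
Import Order.TTheory GRing.Theory Num.Theory.
Local Open Scope ring_scope.
Local Open Scope classical_set_scope.

Theorem corollary1 (R : realFieldType) (thjs thks nuj nuk rhou : R) :
  0 < nuj -> 0 < nuk -> 1 <= rhou ->
  c_u rhou (- nuk) nuk = (rhou - 1) * nuk /\
  c_l rhou (- nuk) nuk = - ((rhou - 1) * nuk) /\
  ((nuk + c_u rhou (- nuk) nuk < nuj \/
    - nuk + c_l rhou (- nuk) nuk > - nuj) <-> nuj > rhou * nuk) /\
  (nuj = nuk -> 1 < rhou ->
   projj (Jset thjs thks (- nuj) nuj (- nuk) nuk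
            (c_l rhou (- nuk) nuk) (c_u rhou (- nuk) nuk))
   = Iint thjs (- nuj) nuj).
Proof.
move=> hj hk hr.
have rp : 0 < rhou by lra.
set r := rhou^-1.
have rr : r * rhou = 1 by rewrite /r mulVf // gt_eqF.
have r0 : 0 < r by rewrite /r invr_gt0.
have r1 : r <= 1 by rewrite /r invf_le1.
have ea : (1 - rhou) / rhou * - nuk = (rhou - 1) * nuk * r by rewrite /r; ring.
have ec : (1 - rhou) / rhou * nuk = - ((rhou - 1) * nuk * r) by rewrite /r; ring.
have h1 : 0 <= (rhou - 1) * nuk by apply: mulr_ge0; lra.
have h2 : (rhou - 1) * nuk * r <= (rhou - 1) * nuk.
  by rewrite -[X in _ <= X]mulr1 ler_wpM2l.
have h3 : 0 <= (rhou - 1) * nuk * r by apply: mulr_ge0; lra.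
have Hu : c_u rhou (- nuk) nuk = (rhou - 1) * nuk.
  rewrite /c_u ea ec.
  rewrite (@max_l _ _ _ ((rhou - 1) * - nuk)); last lra.
  rewrite (@max_r _ _ (- _)); last lra.
  by rewrite max_r.
have Hl : c_l rhou (- nuk) nuk = - ((rhou - 1) * nuk).
  rewrite /c_l ea ec.
  rewrite (@min_r _ _ _ ((rhou - 1) * - nuk)); last lra.
  rewrite (@min_l _ _ (- _)); last lra.
  rewrite min_l; [ring|lra].
split=> //; split=> //; split.
  rewrite Hu Hl; split; [case; lra | lra].
move=> E r1'; subst nuj.
apply/seteqP; split => t.
  by case=> s [].
move=> It; exists (thks + (t - thjs)); rewrite /Jset /Iint /IDint /= in It *.
rewrite Hu Hl.
have h4 : 0 <= (rhou - 1) * nuk by [].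
move/andP: It => [a b].
split; first by apply/andP; split.
split; apply/andP; split; lra.
Qed.
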